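(* If $I$ is a 1-absorbing primary hyperideal of $R$, then $\sqrt{I}$ is a prime hyperideal of $R$.
   Context: Throughout, $R$ is a commutative multiplicative hyperring ($(R,+)$ abelian group, $\circ$ a commutative associative hyperoperation into nonempty subsets, $a\circ(b+c)\subseteq a\circ b+a\circ c$, $a\circ(-b)=(-a)\circ b=-(a\circ b)$), with identity $1$ ($a\in a\circ 1$); $x$ is a unit if $1\in x\circ y$ for some $y$. All hyperideals are $\mathbf{C}$-hyperideals (for any finite product $A=r_1\circ\cdots\circ r_n$, $A\cap I\neq\emptyset\Rightarrow A\subseteq I$). A prime hyperideal is a proper $P$ with $x\circ y\subseteq P\Rightarrow x\in P$ or $y\in P$. $\sqrt I$ is the intersection of the prime hyperideals containing $I$, equal to $\{r: r^n\subseteq I\text{ for some }n\}$. A 1-absorbing primary hyperideal is a proper hyperideal $I$ such that for all nonunit $x,y,z\in R$, $x\circ y\circ z\subseteq I$ implies $x\circ y\subseteq I$ or $z\in\sqrt I$. *)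

(* Defs.v *)
From mathcomp Require Import all_boot all_algebra.
Set Implicit Arguments. Unset Strict Implicit. Unset Printing Implicit Defensive.
Import GRing.Theory.
Local Open Scope ring_scope.

(* hmul a b z  means  z \in a o b. *)
Record mhyperring (R : zmodType) := MHyperring {
  hmul : R -> R -> R -> Prop;
  hone : R;
  hmul_nonempty : forall a b, exists z, hmul a b z;
  hmul_comm : forall a b z, hmul a b z <-> hmul b a z;
  (* (a o b) o c = a o (b o c) as sets *)
  hmul_assoc : forall a b c z,
    (exists u, hmul a b u /\ hmul u c z) <-> (exists v, hmul b c v /\ hmul a v z);
  (* a o (b + c) is included in a o b + a o c *)
  hmul_distr : forall a b c z, hmul a (b + c) z ->
    exists u v, [/\ hmul a b u, hmul a c v & z = u + v];
  hmul_oppr : forall a b z, hmul a (- b) z <-> hmul (- a) b z;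
  (* (-a) o b = -(a o b) *)
  hmul_oppl : forall a b z, hmul (- a) b z <-> hmul a b (- z);
  hmul_one : forall a, hmul a hone a
}.

Section Hyperideals.
Variables (R : zmodType) (H : mhyperring R).

Definition subset (A B : R -> Prop) := forall x, A x -> B x.

Definition setmul (A : R -> Prop) (b : R) : R -> Prop :=
  fun z => exists a, A a /\ hmul H a b z.

Definition hprod (r : R) (rs : seq R) : R -> Prop :=
  foldl setmul (fun z => z = r) rs.

Definition hmul2 (x y : R) : R -> Prop := hprod x [:: y].
Definition hmul3 (x y z : R) : R -> Prop := hprod x [:: y; z].

(* r^n for n >= 1: hpow r n = r^(n+1) *)
Definition hpow (r : R) (n : nat) : R -> Prop := hprod r (nseq n r).

Definition hunit (x : R) : Prop := exists y, hmul H x y (hone H).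

(* hyperideal (all hyperideals are C-hyperideals) *)
Definition hyperideal (I : R -> Prop) : Prop :=
  [/\ exists a, I a,
      (forall a b, I a -> I b -> I (a - b)),
      (forall r a, I a -> subset (hmul H r a) I)
    & (forall r rs, (exists z, hprod r rs z /\ I z) -> subset (hprod r rs) I)].

Definition proper (I : R -> Prop) : Prop := exists r, ~ I r.

Definition prime_hyperideal (P : R -> Prop) : Prop :=
  [/\ hyperideal P, proper P &
      forall x y, subset (hmul2 x y) P -> P x \/ P y].

Definition hrad (I : R -> Prop) : R -> Prop :=
  fun r => exists n, subset (hpow r n) I.

Definition one_absorbing_primary (I : R -> Prop) : Prop :=
  [/\ hyperideal I, proper I &
      forall x y z, ~ hunit x -> ~ hunit y -> ~ hunit z ->
        subset (hmul3 x y z) I -> subset (hmul2 x y) I \/ hrad I z].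

End Hyperideals.

(* Main.v *)
Require Import Defs.
From mathcomp Require Import all_boot all_algebra.
From Stdlib Require Import Permutation Classical.
From mathcomp Require Import zify.
Set Implicit Arguments. Unset Strict Implicit. Unset Printing Implicit Defensive.
Import GRing.Theory.
Local Open Scope ring_scope.

Fixpoint rep n {T : Type} (l : seq T) := if n is n'.+1 then l ++ rep n' l else [::].

Lemma count_rep {T : Type} (a : pred T) n (l : seq T) : count a (rep n l) = (n * count a l)%N.
Proof. elim: n => //= n IH; rewrite count_cat IH mulSn. by []. Qed.

Ltac permtac := apply/permP => ?;
  rewrite /= ?count_rev; repeat (rewrite ?count_cat ?count_nseq ?count_rep /=); lia.

Section S.
Variables (R : zmodType) (H : mhyperring R).
Local Notation hm := (hmul H).

Definition P (l : seq R) : R -> Prop :=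
  match l with nil => fun _ => False | r :: rs => hprod H r rs end.

Lemma foldl_union A l z :
  foldl (setmul H) A l z <-> exists a, A a /\ hprod H a l z.
Proof.
elim: l A z => [|r l IH] A z /=.
  split; first by move=> Az; exists z.
  by case=> a [Aa ->].
rewrite IH; split.
  case=> w [[a [Aa haw]] hw]; exists a; split=> //.
  rewrite /hprod /= IH; exists w; split=> //; by exists a.
case=> a [Aa]; rewrite /hprod /= IH; case=> w [[a' [-> h]] hw].
by exists w; split=> //; exists a.
Qed.

Lemma hprod_cons a r l z :
  hprod H a (r :: l) z <-> exists v, hm a r v /\ hprod H v l z.
Proof.
rewrite /hprod /= foldl_union; split.
  by case=> v [[a' [-> h]] hv]; exists v.
by case=> v [h hv]; exists v; split=> //; exists a.
Qed.

Lemma hprod_nil a z : hprod H a nil z <-> z = a.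
Proof. by []. Qed.

Lemma foldl_mono (A B : R -> Prop) l :
  Defs.subset A B -> Defs.subset (foldl (setmul H) A l) (foldl (setmul H) B l).
Proof.
move=> AB z; rewrite !foldl_union; case=> a [Aa h]; exists a; split=> //; exact: AB.
Qed.

Lemma hprod_nonempty a l : exists z, hprod H a l z.
Proof.
elim: l a => [|r l IH] a; first by exists a.
case: (hmul_nonempty H a r) => v hv; case: (IH v) => z hz.
by exists z; apply/hprod_cons; exists v.
Qed.

Lemma P_nonempty l : l != [::] -> exists z, P l z.
Proof. case: l => // r l _; exact: hprod_nonempty. Qed.

Lemma hprod_perm_tail l l' : Permutation l l' ->
  forall a, Defs.subset (hprod H a l) (hprod H a l').
Proof.
elim=> {l l'} [|x l l' _ IH|x y l|l l' l'' _ IH1 _ IH2] a z //.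
- rewrite !hprod_cons; case=> v [h hv]; exists v; split=> //; exact: IH.
- rewrite !hprod_cons; case=> v [h1]; rewrite hprod_cons; case=> w [h2 hw].
  have : exists u, hm y x u /\ hm a u w.
    by apply/(hmul_assoc H); exists v.
  case=> u [hu hw']; have hu' : hm x y u by apply/(hmul_comm H).
  have : exists t, hm a x t /\ hm t y w.
    by apply/(hmul_assoc H); exists u.
  case=> t [ht htw]; exists t; split=> //; apply/hprod_cons; by exists w.
- move=> h; apply: IH2; exact: IH1.
Qed.

Lemma P_perm l l' : Permutation l l' -> Defs.subset (P l) (P l').
Proof.
elim=> {l l'} [|x l l' pl _|x y l|l l' l'' _ IH1 _ IH2] z //=.
- exact: hprod_perm_tail.
- rewrite !hprod_cons; case=> v [h hv]; exists v; split=> //; exact/(hmul_comm H).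
- move=> h; apply: IH2; exact: IH1.
Qed.

Lemma perm_eq_Permutation (l1 l2 : seq R) : perm_eq l1 l2 -> Permutation l1 l2.
Proof.
elim: l1 l2 => [|x l1 IH] l2.
  by rewrite perm_sym => /perm_nilP ->.
move=> pe; have xl2 : x \in l2 by rewrite -(perm_mem pe) mem_head.
move: pe; case/splitPr: xl2 => a b pe.
have pe' : perm_eq l1 (a ++ b).
  rewrite -(perm_cons x); apply: (seq.perm_trans pe).
  have -> : a ++ x :: b = a ++ [:: x] ++ b by [].
  by rewrite perm_catCA.
apply: Permutation_cons_app; exact: IH.
Qed.

Lemma P_perm_eq l l' : perm_eq l l' -> Defs.subset (P l) (P l').
Proof. move=> h; apply: P_perm; exact: perm_eq_Permutation. Qed.

Lemma P_subst y l1 l2 : P l1 y -> Defs.subset (P (y :: l2)) (P (l1 ++ l2)).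
Proof.
case: l1 => // r rs hy z /=; rewrite /hprod foldl_cat.
apply: foldl_mono => w -> //.
Qed.


Lemma P_pow y l n l2 : P l y ->
  Defs.subset (P (nseq n y ++ l2)) (P (rep n l ++ l2)).
Proof.
move=> hy; elim: n l2 => [|n IH] l2 z //.
rewrite [nseq _ _ ++ _]/= [rep _ _]/= -catA.
move=> /(P_subst (l2 := nseq n y ++ l2) hy) h.
have h2 : P (nseq n y ++ l2 ++ l) z.
  apply: P_perm_eq h; by rewrite perm_catC catA.
have := IH _ _ h2; apply: P_perm_eq.
by rewrite catA perm_catC catA perm_refl.
Qed.


Lemma hprod_opp a l z : hprod H (- a) l z -> hprod H a l (- z).
Proof.
elim: l a z => [|r l IH] a z; first by rewrite !hprod_nil => ->; rewrite opprK.
rewrite !hprod_cons; case=> v [h hv]; exists (- v); split.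
  by apply/(hmul_oppl H).
by apply: IH; rewrite opprK.
Qed.

Lemma hprod_nseq_opp a n x z : hprod H x (nseq n (- a)) z ->
  hprod H x (nseq n a) z \/ hprod H x (nseq n a) (- z).
Proof.
elim: n x z => [|n IH] x z; first by left.
rewrite /= hprod_cons; case=> v [h hv].
have h' : hm x a (- v) by apply/(hmul_oppl H); apply/(hmul_oppr H).
case: (IH _ _ hv) => hh.
  right; apply/hprod_cons; exists (- v); split=> //.
  by apply: hprod_opp; rewrite opprK.
left; apply/hprod_cons; exists (- v); split=> //.
by rewrite -[z]opprK; apply: hprod_opp; rewrite opprK.
Qed.

Lemma hpow_opp a n z : hpow H (- a) n z -> hpow H a n z \/ hpow H a n (- z).
Proof.
rewrite /hpow => /hprod_nseq_opp [] /hprod_opp h; first by right.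
by left; rewrite -[z]opprK.
Qed.

Lemma expand s t l z : P ((s + t) :: l) z ->
  exists z1 z2, [/\ P (s :: l) z1, P (t :: l) z2 & z = z1 + z2].
Proof.
rewrite /=; elim: l s t z => [|r l IH] s t z; first by move=> /= ->; exists s, t.
rewrite hprod_cons; case=> v [h hv].
have h' : hm r (s + t) v by apply/(hmul_comm H).
case: (hmul_distr h') => v1 [v2 [h1 h2 ev]].
rewrite ev in hv; case: (IH _ _ _ hv) => z1 [z2 [hz1 hz2 ez]].
exists z1, z2; split=> //; apply/hprod_cons.
  by exists v1; split=> //; apply/(hmul_comm H).
by exists v2; split=> //; apply/(hmul_comm H).
Qed.

Section Ideal.
Variable I : R -> Prop.
Hypothesis hI : hyperideal H I.

Lemma I0 : I 0.
Proof. case: hI => [[a Ia] Isub _ _]; by rewrite -(subrr a); apply: Isub. Qed.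

Lemma IN x : I x -> I (- x).
Proof. case: hI => [_ Isub _ _] Ix; rewrite -sub0r; apply: Isub => //; exact: I0. Qed.

Lemma ID x y : I x -> I y -> I (x + y).
Proof.
case: hI => [_ Isub _ _] Ix Iy; rewrite -[y]opprK; apply: Isub => //; exact: IN.
Qed.

Lemma P_absorb r rs l2 : Defs.subset (P (r :: rs)) I -> Defs.subset (P ((r :: rs) ++ l2)) I.
Proof.
case: hI => [_ _ Iabs _].
rewrite /P /hprod /= foldl_cat.
elim: l2 (foldl (setmul H) (fun z => z = r) rs) => [|x l2 IH] A // AI.
apply: IH => z [a [Aa h]]; apply: (Iabs x a); first exact: AI.
exact/(hmul_comm H).
Qed.

Lemma P_C l : (exists z, P l z /\ I z) -> Defs.subset (P l) I.
Proof.
case: hI => [_ _ _ IC]; case: l => [[z [[]]]|r rs h] /=; exact: IC.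
Qed.

Lemma unit_remove x l : hunit H x -> Defs.subset (P (x :: l)) I -> Defs.subset (P l) I.
Proof.
case=> u hu hxl.
have h1 : Defs.subset (P (hone H :: l)) I.
  move=> z hz.
  have hz' : P ([:: x; u] ++ l) z.
    apply: (P_subst (l1 := [:: x; u])) hz; apply/hprod_cons; by exists (hone H).
  have := P_perm_eq (l' := (x :: l) ++ [:: u]) _ hz'.
  move=> /(_ _) hz2; apply: (P_absorb hxl); apply: hz2.
  by rewrite /= perm_cons -cat1s perm_catC.
case: l h1 {hxl} => [_ z []|r rs h1 z hz]; apply: h1 => /=.
rewrite /hprod /=; apply: (foldl_mono _ hz) => w ->; exists (hone H); split=> //.
exact/(hmul_comm H)/(hmul_one H).
Qed.



Lemma rad_add a b : hrad H I a -> hrad H I b -> hrad H I (a + b).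
Proof.
case=> m hma [k hkb]; exists (m + k)%N.
suff : forall j p q, ((m + k).+1 <= p + q + j)%N ->
  Defs.subset (P (nseq p a ++ nseq q b ++ nseq j (a + b))) I.
  by move=> /(_ (m + k).+1 0%N 0%N (leqnn _)).
elim=> [|j IH] p q hpq z.
  rewrite cats0 addn0 in hpq *.
  case: (ltnP m p) => hmp.
    rewrite -(subnKC hmp) nseqD -catA => hz.
    exact: (P_absorb (r := a) (rs := nseq m a) hma hz).
  have hkq : (k < q)%N by lia.
  move=> hz; have hz' : P (nseq q b ++ nseq p a) z.
    by apply: P_perm_eq hz; permtac.
  move: hz'; rewrite -(subnKC hkq) nseqD -catA => hz'.
  exact: (P_absorb (r := b) (rs := nseq k b) hkb hz').
move=> hz.
have hz' : P ((a + b) :: nseq p a ++ nseq q b ++ nseq j (a + b)) z.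
  by apply: P_perm_eq hz; permtac.
case: (expand hz') => z1 [z2 [h1 h2 ->]].
apply: ID.
  apply: (IH p.+1 q); first by lia.
  by apply: P_perm_eq h1; permtac.
apply: (IH p q.+1); first by lia.
by apply: P_perm_eq h2; permtac.
Qed.

Lemma rad_opp a : hrad H I a -> hrad H I (- a).
Proof.
case=> n hn; exists n => z /hpow_opp [] /hn // /IN; rewrite opprK; exact.
Qed.

Lemma rad_pow y l n : P l y -> Defs.subset (P (rep n.+1 l)) I -> Defs.subset (hpow H y n) I.
Proof.
move=> hy hs z hz; apply: hs.
have := P_pow (n := n.+1) (l2 := [::]) hy; rewrite !cats0; exact.
Qed.

Lemma rad_C r rs : (exists z, hprod H r rs z /\ hrad H I z) ->
  Defs.subset (hprod H r rs) (hrad H I).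
Proof.
case=> z [hz [n hn]] w hw; exists n.
apply: (rad_pow (l := r :: rs) hw).
apply: P_C.
case: (hprod_nonempty z (nseq n z)) => e he.
exists e; split; last exact: hn.
have := P_pow (n := n.+1) (l2 := [::]) (l := r :: rs) hz; rewrite !cats0; exact.
Qed.

Lemma rad_hyperideal : hyperideal H (hrad H I).
Proof.
case: (hI) => [[a0 Ia0] _ _ _].
split.
- by exists a0, 0%N => z /= ->.
- move=> a b ha hb; apply: rad_add => //; exact: rad_opp.
- move=> r a ha z hz.
  case: ha => n hn; exists n.
  apply: (rad_pow (l := [:: r; a]) (n := n)).
    by apply/hprod_cons; exists z.
  move=> e he.
  have he' : P (nseq n.+1 a ++ nseq n.+1 r) e by apply: P_perm_eq he; permtac.
  exact: (P_absorb (r := a) (rs := nseq n a) hn he').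
- move=> r rs h; exact: rad_C.
Qed.


Lemma unit_remove_n x j l : hunit H x ->
  Defs.subset (P (nseq j x ++ l)) I -> Defs.subset (P l) I.
Proof.
move=> hx; elim: j => // j IH h; apply: IH; exact: (unit_remove hx).
Qed.

End Ideal.

Lemma P_rcons r rs x w : P ((r :: rs) ++ [:: x]) w -> exists u, P (r :: rs) u /\ hm u x w.
Proof.
rewrite /P /hprod /= foldl_cat /=; case=> u [hu h]; by exists u.
Qed.

Lemma unit_elem l b x : P l b -> hunit H b -> x \in l -> hunit H x.
Proof.
move=> hb [v hv] xl; move: hb; case/splitPr: xl => l1 l2 hb.
have h1 : P ((l1 ++ x :: l2) ++ [:: v]) (hone H).
  apply: (P_subst hb); apply/hprod_cons; by exists (hone H).
have h2 : P ((v :: l1 ++ l2) ++ [:: x]) (hone H).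
  by apply: P_perm_eq h1; permtac.
case: (P_rcons h2) => u [_ hu]; exists u; exact/(hmul_comm H).
Qed.

End S.

Theorem mainTheorem5 (R : zmodType) (H : mhyperring R) (I : R -> Prop) :
  one_absorbing_primary H I -> prime_hyperideal H (hrad H I).
Proof.
case=> hI [r nr] habs.
have hI' := hI; case: hI' => [_ _ Iabs _].
split; first exact: rad_hyperideal.
- exists (hone H); case=> n hn; apply: nr.
  have h1 : hpow H (hone H) n (hone H).
    rewrite /hpow; elim: n {hn} => [|n IH] //.
    apply/hprod_cons; exists (hone H); split; last exact: IH.
    exact: (hmul_one H).
  exact: (Iabs r (hone H) (hn _ h1) r (hmul_one H r)).
move=> x y hs.
case: (hprod_nonempty H x [:: y]) => z hz.
case: (hs z hz) => n hn.
have hL : Defs.subset (P H (nseq n.+1 x ++ nseq n.+1 y)) I.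
  move=> w hw.
  have hC : Defs.subset (P H (rep n.+1 [:: x; y])) I.
    apply: (P_C hI).
    case: (hprod_nonempty H z (nseq n z)) => e he.
    exists e; split; last exact: hn.
    have := P_pow (n := n.+1) (l2 := [::]) (l := [:: x; y]) hz; rewrite !cats0; exact.
  apply: hC; apply: P_perm_eq hw; permtac.
case: (classic (hunit H x)) => ux.
  right; exists n => w hw.
  apply: (unit_remove_n hI ux hL); by rewrite /P.
case: (classic (hunit H y)) => uy.
  left; exists n => w hw.
  have hL' : Defs.subset (P H (nseq n.+1 y ++ nseq n.+1 x)) I.
    by move=> e he; apply: hL; apply: P_perm_eq he; permtac.
  by apply: (unit_remove_n hI uy hL').
case: (hprod_nonempty H x (nseq n x)) => b hb.
case: (hprod_nonempty H y (nseq n y)) => c hc.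
have ub : ~ hunit H b.
  move=> ub'; apply: ux; apply: (unit_elem (l := nseq n.+1 x) hb ub'); exact: mem_head.
have uc : ~ hunit H c.
  move=> ub'; apply: uy; apply: (unit_elem (l := nseq n.+1 y) hc ub'); exact: mem_head.
have h3 : Defs.subset (hmul3 H x b c) I.
  move=> w hw.
  have w1 : P H (b :: [:: c; x]) w by apply: (P_perm_eq (l := [:: x; b; c])) hw; permtac.
  have w2 := P_subst (l1 := nseq n.+1 x) hb w1.
  have w3 : P H (c :: nseq n.+1 x ++ [:: x]) w by apply: P_perm_eq w2; permtac.
  have w4 := P_subst (l1 := nseq n.+1 y) hc w3.
  have w5 : P H ((x :: (nseq n x ++ nseq n.+1 y)) ++ [:: x]) w.
    by apply: P_perm_eq w4; permtac.
  exact: (P_absorb hI (r := x) (rs := nseq n x ++ nseq n.+1 y) hL w5).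
case: (habs x b c ux ub uc h3) => [hxb|[m hm]].
  left; exists n.+1; apply: (P_C hI (l := nseq n.+2 x)).
  case: (hprod_nonempty H x [:: b]) => e he.
  exists e; split; last exact: hxb.
  have e1 : P H (b :: [:: x]) e by apply: (P_perm_eq (l := [:: x; b])) he; permtac.
  have e2 := P_subst (l1 := nseq n.+1 x) hb e1.
  by apply: P_perm_eq e2; permtac.
right; exists (m * n.+1 + n)%N; apply: (P_C hI (l := nseq (m * n.+1 + n).+1 y)).
case: (hprod_nonempty H c (nseq m c)) => e he.
exists e; split; last exact: hm.
have e1 := P_pow (n := m.+1) (l2 := [::]) (l := nseq n.+1 y) hc.
rewrite !cats0 in e1; have e2 := e1 e he.
apply: P_perm_eq e2; apply/permP => ?.
rewrite count_rep !count_nseq; nia.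
Qed.
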